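(* Let $u\geqslant0$ be an integer. There exists a set $\mathfrak{B}$ of integer $2\times3$ matrices which is the disjoint union of two subsets $\mathfrak{B}^{\mathrm{I}}$ and $\mathfrak{B}^{\mathrm{II}}$ with $|\mathfrak{B}^{\mathrm{I}}|=14u+12$ and $|\mathfrak{B}^{\mathrm{II}}|=2u$, such that $\sigma_r(M)=(0,0)$ and $\sigma_c(M)=(-2,1,1)$ for all $M\in\mathfrak{B}^{\mathrm{I}}$, $\sigma_r(M)=(-1,1)$ and $\sigma_c(M)=(-2,1,1)$ for all $M\in\mathfrak{B}^{\mathrm{II}}$, and the multiset of absolute values of all entries of all matrices in $\mathfrak{B}$ is exactly the set $$\begin{aligned}&[24u+36,32u+34]_2\cup[32u+37,36u+47]_2\cup[40u+49,44u+59]_2\cup[48u+61,96u+83]_2\cup[96u+84,128u+107]\\&\cup[152u+144,158u+149]\cup[162u+150,164u+155]\cup[168u+156,192u+167]\end{aligned}$$ (each element occurring once).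
   Context: For integers $a\equiv b\pmod d$ with $d\geqslant1$, $[a,b]_d=\{a+id: 0\leqslant i\leqslant (b-a)/d\}$ if $a\leqslant b$ and $[a,b]_d=\varnothing$ if $a>b$; $[a,b]=[a,b]_1$. For a matrix $M$, $\sigma_r(M)$ is the sequence of its row sums and $\sigma_c(M)$ the sequence of its column sums. *)

(* Defs.v *)
From mathcomp Require Import all_boot all_order all_algebra.
Set Implicit Arguments. Unset Strict Implicit. Unset Printing Implicit Defensive.
Import Order.TTheory GRing.Theory Num.Theory.

(* [a,b]_d as a sequence of naturals (a <= b, a = b mod d assumed by callers):
   {a + i d : 0 <= i <= (b-a)/d} if a <= b, empty otherwise. *)
Definition ivl_step (a b d : nat) : seq nat :=
  if a <= b then [seq a + i * d | i <- iota 0 ((b - a) %/ d).+1] else [::].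

Definition ivl (a b : nat) : seq nat := ivl_step a b 1.

Local Open Scope ring_scope.

Definition sigma_r (m n : nat) (M : 'M[int]_(m, n)) : seq int :=
  [seq \sum_(j < n) M i j | i <- enum 'I_m].
Definition sigma_c (m n : nat) (M : 'M[int]_(m, n)) : seq int :=
  [seq \sum_(i < m) M i j | j <- enum 'I_n].

Definition entries (m n : nat) (M : 'M[int]_(m, n)) : seq int :=
  [seq M i j | i <- enum 'I_m, j <- enum 'I_n].

Definition abs_entries (m n : nat) (B : seq 'M[int]_(m, n)) : seq nat :=
  flatten [seq [seq absz x | x <- entries M] | M <- B].

Definition target_set (u : nat) : seq nat :=
  ivl_step (24*u+36) (32*u+34) 2 ++ ivl_step (32*u+37) (36*u+47) 2 ++
  ivl_step (40*u+49) (44*u+59) 2 ++ ivl_step (48*u+61) (96*u+83) 2 ++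
  ivl (96*u+84) (128*u+107) ++ ivl (152*u+144) (158*u+149) ++
  ivl (162*u+150) (164*u+155) ++ ivl (168*u+156) (192*u+167).

(* Main.v *)
Require Import Defs.
From mathcomp Require Import all_boot all_order all_algebra.
From mathcomp Require Import zify ring.
Import Order.TTheory GRing.Theory Num.Theory.
Local Open Scope ring_scope.
Definition mk (k m n : nat) : 'M[int]_(2,3) := \matrix_(i < 2, j < 3)
  (if i == ord0 then nth 0 [:: k%:Z; (m+1)%N%:Z; - n%:Z] j
   else nth 0 [:: - (k+2)%N%:Z; - m%:Z; (n+1)%N%:Z] j).
Lemma entries_mk k m n : entries (mk k m n) = [:: k%:Z; (m+1)%N%:Z; - n%:Z; - (k+2)%N%:Z; - m%:Z; (n+1)%N%:Z].
Proof. rewrite /entries enum_ordSl /= !enum_ordSl enum_ord0 /= !mxE /=. done. Qed.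
Lemma sc k m n : sigma_c (mk k m n) = [:: -2; 1; 1].
Proof. rewrite /sigma_c !enum_ordSl enum_ord0 /= !big_ord_recl big_ord0 /= !mxE /=. congr (_ :: _ :: _ :: _); rewrite ?big_ord0 /=; lia. Qed.
Lemma sr1 k m n : n = (k+m+1)%N -> sigma_r (mk k m n) = [:: 0; 0].
Proof. move=> ->. rewrite /sigma_r !enum_ordSl enum_ord0 /= !big_ord_recl big_ord0 /= !mxE /=. congr (_ :: _ :: _); rewrite ?big_ord0 /=; lia. Qed.
Lemma sr2 k m n : n = (k+m+2)%N -> sigma_r (mk k m n) = [:: -1; 1].
Proof. move=> ->. rewrite /sigma_r !enum_ordSl enum_ord0 /= !big_ord_recl big_ord0 /= !mxE /=. congr (_ :: _ :: _); rewrite ?big_ord0 /=; lia. Qed.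

Definition row (k m n : nat) : seq nat := [:: k; (m+1)%N; n; (k+2)%N; m; (n+1)%N].
Lemma abs_mk k m n : [seq absz x | x <- entries (mk k m n)] = row k m n.
Proof. by rewrite entries_mk /= !abszN. Qed.

Definition blk len (fk fm fn : nat -> nat) :=
  [seq mk (fk t) (fm t) (fn t) | t <- iota 0 len].

Lemma abs_cat (s1 s2 : seq 'M[int]_(2,3)) :
  abs_entries (s1 ++ s2) = abs_entries s1 ++ abs_entries s2.
Proof. by rewrite /abs_entries map_cat flatten_cat. Qed.

Lemma size_entries (M : 'M[int]_(2,3)) : size [seq absz x | x <- entries M] = 6%N.
Proof. by rewrite size_map /entries size_allpairs !size_enum_ord. Qed.

Lemma size_abs (s : seq 'M[int]_(2,3)) : size (abs_entries s) = (6 * size s)%N.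
Proof.
rewrite /abs_entries; elim: s => //= M s IH.
by rewrite size_cat IH size_entries mulnS.
Qed.

Lemma mem_blk x len fk fm fn :
  (exists t, (t < len)%N /\ x \in row (fk t) (fm t) (fn t)) ->
  x \in abs_entries (blk len fk fm fn).
Proof.
case=> t [ht hx]; rewrite /abs_entries /blk -map_comp.
apply/flatten_mapP; exists t; first by rewrite mem_iota.
by rewrite /= abs_mk.
Qed.

Lemma uniq_flatten_map (T U : eqType) (f : T -> seq U) s :
  (forall x, f x != [::]) -> uniq (flatten (map f s)) -> uniq s.
Proof.
move=> ne; elim: s => //= x s IH; rewrite cat_uniq => /and3P[_ hn hu].
rewrite IH // andbT; apply/negP => xs.
case E: (f x) (ne x) => [//|y r] _.
have H : y \in flatten (map f s).
  by apply/flatten_mapP; exists x => //; rewrite E inE eqxx.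
move/hasPn: hn => /(_ y H). by rewrite E inE eqxx.
Qed.

Lemma ivl_stepP a b d x : (0 < d)%N -> x \in ivl_step a b d ->
  exists i, x = (a + i * d)%N /\ (x <= b)%N.
Proof.
move=> d0; rewrite /ivl_step; case: ifP => // hab.
move=> /mapP [i]; rewrite mem_iota add0n => /andP[_ hi] ->.
exists i; split => //.
rewrite ltnS leq_divRL // in hi.
by rewrite -leq_subRL.
Qed.

Lemma size_ivl_step a b d : (0 < d)%N ->
  size (ivl_step a b d) = ((b + d - a) %/ d)%N.
Proof.
move=> d0; rewrite /ivl_step; case: ifP => hab.
  rewrite size_map size_iota addnC -addnBA // divnDl ?dvdnn // divnn d0; lia.
rewrite divn_small //; lia.
Qed.

Lemma uniq_ivl_step a b d : (0 < d)%N -> uniq (ivl_step a b d).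
Proof.
move=> d0; rewrite /ivl_step; case: ifP => // _.
rewrite map_inj_uniq ?iota_uniq // => i j /addnI /eqP.
by rewrite eqn_pmul2r // => /eqP.
Qed.

Lemma all_ivl_step (P : pred nat) a b d : (0 < d)%N ->
  (forall x, (a <= x <= b)%N -> P x) -> all P (ivl_step a b d).
Proof.
move=> d0 H; apply/allP => x hx; have [i [-> hb]] := ivl_stepP _ _ _ _ d0 hx.
by apply: H; rewrite leq_addr hb.
Qed.

Lemma uniq_catI (s1 s2 : seq nat) c : uniq s1 -> uniq s2 ->
  all (fun x => x < c)%N s1 -> all (fun x => c <= x)%N s2 -> uniq (s1 ++ s2).
Proof.
move=> u1 u2 /allP a1 /allP a2; rewrite cat_uniq u1 u2 andbT /=.
apply/hasPn => x x2; apply/negP => x1.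
have := a1 x x1; have := a2 x x2. lia.
Qed.

Ltac allt := rewrite ?all_cat; repeat (apply/andP; split);
  apply: all_ivl_step => // ? /andP[? ?]; lia.

Lemma uniq_target u : uniq (target_set u).
Proof.
rewrite /target_set /ivl.
apply: (uniq_catI _ _ (32*u+35)%N); [exact: uniq_ivl_step| |allt|allt].
apply: (uniq_catI _ _ (40*u+49)%N); [exact: uniq_ivl_step| |allt|allt].
apply: (uniq_catI _ _ (48*u+61)%N); [exact: uniq_ivl_step| |allt|allt].
apply: (uniq_catI _ _ (96*u+84)%N); [exact: uniq_ivl_step| |allt|allt].
apply: (uniq_catI _ _ (152*u+144)%N); [exact: uniq_ivl_step| |allt|allt].
apply: (uniq_catI _ _ (162*u+150)%N); [exact: uniq_ivl_step| |allt|allt].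
apply: (uniq_catI _ _ (168*u+156)%N); [exact: uniq_ivl_step| |allt|allt].
exact: uniq_ivl_step.
Qed.

Lemma size_target u : size (target_set u) = (96 * u + 72)%N.
Proof. rewrite /target_set /ivl !size_cat !size_ivl_step //. lia. Qed.

Definition BII u := blk (2*u) (fun t => 24*u+36+4*t)%N (fun t => 128*u+106-2*t)%N (fun t => 152*u+144+2*t)%N.
Definition BA u := blk (u+3) (fun t => 32*u+37+4*t)%N (fun t => 124*u+106-2*t)%N (fun t => 156*u+144+2*t)%N.
Definition BB u := blk (u+3) (fun t => 40*u+49+4*t)%N (fun t => 122*u+100-2*t)%N (fun t => 162*u+150+2*t)%N.
Definition BC u := blk (12*u+6) (fun t => 48*u+61+4*t)%N (fun t => 120*u+94-2*t)%N (fun t => 168*u+156+2*t)%N.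

Ltac blkw t := apply: mem_blk; exists t; split; [lia | rewrite /row /= !inE; lia].

Lemma sub_target u : {subset target_set u <= abs_entries ((BA u ++ BB u ++ BC u) ++ BII u)}.
Proof.
move=> x; rewrite /target_set /ivl !abs_cat !mem_cat.
case/orP => [/(ivl_stepP _ _ _ _ (ltn0Sn _)) [i [-> hb]]|].
  by apply/orP; right; blkw (i %/ 2)%N.
case/orP => [/(ivl_stepP _ _ _ _ (ltn0Sn _)) [i [-> hb]]|].
  by apply/orP; left; apply/orP; left; blkw (i %/ 2)%N.
case/orP => [/(ivl_stepP _ _ _ _ (ltn0Sn _)) [i [-> hb]]|].
  by apply/orP; left; apply/orP; right; apply/orP; left; blkw (i %/ 2)%N.
case/orP => [/(ivl_stepP _ _ _ _ (ltn0Sn _)) [i [-> hb]]|].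
  by apply/orP; left; apply/orP; right; apply/orP; right; blkw (i %/ 2)%N.
case/orP => [/(ivl_stepP _ _ _ _ (ltn0Sn _)) [i [-> hb]]|].
  case: (ltnP (i %/ 2) (12*u+6)) => h1.
    by apply/orP; left; apply/orP; right; apply/orP; right; blkw (12*u+5 - i %/ 2)%N.
  case: (ltnP (i %/ 2) (13*u+9)) => h2.
    by apply/orP; left; apply/orP; right; apply/orP; left; blkw (13*u+8 - i %/ 2)%N.
  case: (ltnP (i %/ 2) (14*u+12)) => h3.
    by apply/orP; left; apply/orP; left; blkw (14*u+11 - i %/ 2)%N.
  by apply/orP; right; blkw (16*u+11 - i %/ 2)%N.
case/orP => [/(ivl_stepP _ _ _ _ (ltn0Sn _)) [i [-> hb]]|].
  case: (ltnP (i %/ 2) (2*u)) => h1.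
    by apply/orP; right; blkw (i %/ 2)%N.
  by apply/orP; left; apply/orP; left; blkw (i %/ 2 - 2*u)%N.
case/orP => [/(ivl_stepP _ _ _ _ (ltn0Sn _)) [i [-> hb]]|].
  by apply/orP; left; apply/orP; right; apply/orP; left; blkw (i %/ 2)%N.
move=> /(ivl_stepP _ _ _ _ (ltn0Sn _)) [i [-> hb]].
by apply/orP; left; apply/orP; right; apply/orP; right; blkw (i %/ 2)%N.
Qed.

Lemma srI k m n : n = (k+m+1)%N ->
  sigma_r (mk k m n) = [:: 0; 0] /\ sigma_c (mk k m n) = [:: -2; 1; 1].
Proof. by move=> h; split; [apply: sr1|apply: sc]. Qed.

Theorem lemma2p6 (u : nat) :
  exists (BI BII : seq 'M[int]_(2, 3)),
    [/\ uniq (BI ++ BII),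
        size BI = (14 * u + 12)%N &
        size BII = (2 * u)%N] /\
    (forall M, M \in BI -> sigma_r M = [:: 0; 0] /\ sigma_c M = [:: -2; 1; 1]) /\
    (forall M, M \in BII -> sigma_r M = [:: -1; 1] /\ sigma_c M = [:: -2; 1; 1]) /\
    uniq (abs_entries (BI ++ BII)) /\
    abs_entries (BI ++ BII) =i target_set u.
Proof.
exists (BA u ++ BB u ++ BC u), (BII u).
have sA : size (abs_entries ((BA u ++ BB u ++ BC u) ++ BII u)) = (96 * u + 72)%N.
  rewrite size_abs !size_cat !size_map !size_iota; lia.
have uT := uniq_target u.
have [_ eqT] := uniq_min_size uT (@sub_target u) (eq_leq (etrans sA (esym (size_target u)))).
have uA : uniq (abs_entries ((BA u ++ BB u ++ BC u) ++ BII u)).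
  by rewrite (uniq_size_uniq uT eqT) sA size_target.
split; [split|split; [|split; [|split]]].
- apply: uniq_flatten_map uA => M.
  by rewrite -size_eq0 size_entries.
- rewrite !size_cat !size_map !size_iota; lia.
- by rewrite size_map size_iota.
- move=> M; rewrite !mem_cat => /orP[|/orP[]] hM;
    case/mapP: hM => t; rewrite mem_iota => /andP[_ ht] ->; apply: srI; lia.
- move=> M /mapP [t]; rewrite mem_iota => /andP[_ ht] ->.
  split; [apply: sr2; lia | exact: sc].
- exact: uA.
- by move=> x; rewrite eqT.
Qed.
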